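(* Let $\mathbf{G}\in\mathbb{F}_2^{m\times n}$ be a triorthogonal matrix with linearly independent rows, written (after row permutation) as $\mathbf{G}=\begin{bmatrix}\mathbf{G}_1\\ \mathbf{G}_0\end{bmatrix}$, where $\mathbf{G}_1\in\mathbb{F}_2^{k\times n}$ consists of the odd-weight rows and $\mathbf{G}_0$ of the even-weight rows of $\mathbf{G}$. Let $\mathcal{Q}^T=\mathrm{CSS}(\mathcal{C}_1,\mathcal{C}_2)$ be the associated triorthogonal code, where $\mathcal{C}_1$ is the binary code generated by $\mathbf{G}$ and $\mathcal{C}_2$ is the dual of the code generated by $\mathbf{G}_0$. Then $\mathcal{Q}^T$ is CZ-transversal: for all $\bm{\psi},\bm{\phi}\in\mathbb{F}_2^k$, $$\mathbf{CZ}^{\otimes n}\big(|\bm{\psi}\rangle_L\otimes|\bm{\phi}\rangle_L\big)=(-1)^{\bm{\psi}\cdot\bm{\phi}}\,|\bm{\psi}\rangle_L\otimes|\bm{\phi}\rangle_L,$$ where $\mathbf{CZ}^{\otimes n}$ applies a physical controlled-$Z$ gate between qubit $i$ of the first block and qubit $i$ of the second block for every $i=1,\dots,n$; i.e., transversal CZ implements the logical CZ between corresponding logical qubits of the two code blocks.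
   Context: A binary matrix $\mathbf{G}=[G_{ij}]\in\mathbb{F}_2^{m\times n}$ is triorthogonal if $\sum_{i=1}^n G_{ai}G_{bi}=0 \pmod 2$ for all rows $a\neq b$, and $\sum_{i=1}^n G_{ai}G_{bi}G_{ci}=0\pmod 2$ for all distinct rows $a,b,c$. For binary linear codes $\mathcal{C}_1,\mathcal{C}_2\subseteq\mathbb{F}_2^n$ with $\mathcal{C}_2^\perp\subset\mathcal{C}_1$, the CSS code $\mathrm{CSS}(\mathcal{C}_1,\mathcal{C}_2)$ is the span of the logical basis states $|\bm{\psi}\rangle_L=|\mathcal{C}_2^\perp|^{-1/2}\sum_{\mathbf{y}\in\mathcal{C}_2^\perp}|\bm{\psi}\mathbf{A}+\mathbf{y}\rangle$, $\bm{\psi}\in\mathbb{F}_2^k$, where $\mathbf{A}\in\mathbb{F}_2^{k\times n}$ is a full-rank mapping matrix whose rows represent a basis of $\mathcal{C}_1/\mathcal{C}_2^\perp$. For the triorthogonal code $\mathcal{Q}^T$ the mapping matrix is $\mathbf{A}=\mathbf{G}_1$, and $k$ equals the number of rows of $\mathbf{G}_1$. The $\mathbf{CZ}$ gate is $\mathrm{diag}(1,1,1,-1)$. *)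

(* Defs.v *)
From HB Require Import structures.
From mathcomp Require Import all_boot all_order all_algebra.
From mathcomp Require Import algC.
Set Implicit Arguments. Unset Strict Implicit. Unset Printing Implicit Defensive.
Import Order.TTheory GRing.Theory Num.Theory.
Local Open Scope ring_scope.

Definition wt n (x : 'rV['F_2]_n) : nat := #|[set i : 'I_n | x 0 i != 0]|.

Definition triorthogonal m n (G : 'M['F_2]_(m, n)) : Prop :=
  (forall a b : 'I_m, a != b -> \sum_(i < n) G a i * G b i = 0) /\
  (forall a b c : 'I_m, a != b -> b != c -> a != c ->
     \sum_(i < n) G a i * G b i * G c i = 0).

Definition code_gen m n (G : 'M['F_2]_(m, n)) : {set 'rV['F_2]_n} :=
  [set x | (x <= G)%MS].

Definition dual n (C : {set 'rV['F_2]_n}) : {set 'rV['F_2]_n} :=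
  [set x | [forall c in C, x *m c^T == 0]].

(* Logical basis state of CSS(C1,C2) with mapping matrix A, as amplitude
   function on computational basis states x in F_2^n:
   |psi>_L = |C2^perp|^{-1/2} sum_{y in C2^perp} |psi A + y>. *)
Definition logical_state k n (C2 : {set 'rV['F_2]_n}) (A : 'M['F_2]_(k, n))
  (psi : 'rV['F_2]_k) (x : 'rV['F_2]_n) : algC :=
  (sqrtC (#|dual C2|%:R : algC))^-1 *
  \sum_(y in dual C2) (if x == psi *m A + y then 1 else 0).

Definition tensor n (f g : 'rV['F_2]_n -> algC) (x y : 'rV['F_2]_n) : algC :=
  f x * g y.

(* Transversal CZ: physical CZ = diag(1,1,1,-1) between qubit i of block 1
   and qubit i of block 2, for every i. *)
Definition CZn n (F : 'rV['F_2]_n -> 'rV['F_2]_n -> algC)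
  (x y : 'rV['F_2]_n) : algC :=
  (\prod_(i < n) (if (x 0 i == 1) && (y 0 i == 1) then -1 else 1)) * F x y.

Definition sgnF2 (b : 'F_2) : algC := if b == 0 then 1 else -1.

(* Main.v *)
Require Import Defs.
From HB Require Import structures.
From mathcomp Require Import all_boot all_order all_algebra.
From mathcomp Require Import algC.
Import Order.TTheory GRing.Theory Num.Theory.
Local Open Scope ring_scope.

Lemma F2_cases (a : 'F_2) : a = 0 \/ a = 1.
Proof.
case: a => [[|[|m]]] H; [left|right|]; try by apply/val_inj.
done.
Qed.

Lemma natF2 (m : nat) : (m%:R : 'F_2) = (odd m)%:R.
Proof.
elim: m => [|m IH] //; rewrite -[m.+1]addn1 natrD IH /= oddD /=.
by case: (odd m); apply/val_inj.
Qed.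

Lemma sum_sq_wt n (w : 'rV['F_2]_n) :
  \sum_(i < n) w 0 i * w 0 i = (odd (wt w))%:R.
Proof.
rewrite -natF2 /wt -sum1_card natr_sum.
rewrite [RHS]big_mkcond; apply: eq_bigr => i _; rewrite inE.
by case: (F2_cases (w 0 i)) => ->; rewrite ?mul0r ?mul1r ?eqxx ?oner_eq0.
Qed.

Lemma sgnF2D (a b : 'F_2) : sgnF2 (a + b) = sgnF2 a * sgnF2 b.
Proof.
rewrite /sgnF2.
by case: (F2_cases a) => ->; case: (F2_cases b) => ->; rewrite ?mulr1 ?mul1r ?mulrNN ?mulr1.
Qed.

Lemma prod_sgn n (x y : 'rV['F_2]_n) :
  \prod_(i < n) (if (x 0 i == 1) && (y 0 i == 1) then -1 else 1 : algC)
  = sgnF2 ((x *m y^T) 0 0).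
Proof.
have -> : (x *m y^T) 0 0 = \sum_(i < n) x 0 i * y 0 i.
  by rewrite !mxE; apply: eq_bigr => i _; rewrite mxE.
elim/big_rec2: _ => [|i a b _ ->]; first by rewrite /sgnF2 eqxx.
rewrite sgnF2D; congr (_ * _).
by case: (F2_cases (x 0 i)) => ->; case: (F2_cases (y 0 i)) => ->.
Qed.

Theorem theorem1 (k r n : nat)
  (G1 : 'M['F_2]_(k, n)) (G0 : 'M['F_2]_(r, n))
  (Htri : triorthogonal (col_mx G1 G0))
  (Hfree : row_free (col_mx G1 G0))
  (Hodd : forall i : 'I_k, odd (wt (row i G1)))
  (Heven : forall i : 'I_r, ~~ odd (wt (row i G0))) :
  let C2 := dual (code_gen G0) in
  forall (psi phi : 'rV['F_2]_k) (x y : 'rV['F_2]_n),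
    CZn (tensor (logical_state C2 G1 psi) (logical_state C2 G1 phi)) x y =
    sgnF2 ((psi *m phi^T) 0 0) *
      tensor (logical_state C2 G1 psi) (logical_state C2 G1 phi) x y.
Proof.
move=> C2 psi phi x y.
have [Hort _] := Htri.
set G := col_mx G1 G0.
have GG a b : (G *m G^T) a b = \sum_(i < n) G a i * G b i.
  by rewrite [LHS]mxE; apply: eq_bigr => i _; rewrite [G^T _ _]mxE.
have G11 : G1 *m G1^T = 1%:M.
  apply/matrixP => a b.
  have -> : (G1 *m G1^T) a b = (G *m G^T) (lshift r a) (lshift r b).
    by rewrite GG [LHS]mxE; apply: eq_bigr => i _; rewrite /G !col_mxEu mxE.
  rewrite GG mxE; have [<-|ne] := eqVneq a b.
    have -> : \sum_(i < n) G (lshift r a) i * G (lshift r a) i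
         = \sum_(i < n) row a G1 0 i * row a G1 0 i.
      by apply: eq_bigr => i _; rewrite /G !col_mxEu !mxE.
    by rewrite sum_sq_wt Hodd.
  by rewrite Hort // eq_shift.
have G10 : G1 *m G0^T = 0.
  apply/matrixP => a b.
  have -> : (G1 *m G0^T) a b = (G *m G^T) (lshift r a) (rshift k b).
    by rewrite GG [LHS]mxE; apply: eq_bigr => i _; rewrite /G col_mxEu col_mxEd mxE.
  by rewrite GG mxE Hort // eq_shift.
have G00 : G0 *m G0^T = 0.
  apply/matrixP => a b.
  have -> : (G0 *m G0^T) a b = (G *m G^T) (rshift k a) (rshift k b).
    by rewrite GG [LHS]mxE; apply: eq_bigr => i _; rewrite /G !col_mxEd mxE.
  rewrite GG mxE; have [<-|ne] := eqVneq a b.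
    have -> : \sum_(i < n) G (rshift k a) i * G (rshift k a) i
         = \sum_(i < n) row a G0 0 i * row a G0 0 i.
      by apply: eq_bigr => i _; rewrite /G !col_mxEd !mxE.
    by rewrite sum_sq_wt (negbTE (Heven a)).
  by rewrite Hort // eq_shift.
have inC2 (w : 'rV['F_2]_n) : w *m G0^T = 0 -> w \in C2.
  move=> Hw; rewrite inE; apply/forall_inP => s; rewrite inE => /submxP [a ->].
  by rewrite trmx_mul mulmxA Hw mul0mx.
have G1C2 (p : 'rV['F_2]_k) : p *m G1 \in C2.
  by apply: inC2; rewrite -mulmxA G10 mulmx0.
have DC2 (v : 'rV['F_2]_n) : v \in dual C2 -> v \in C2.
  rewrite !inE => /forall_inP Hv; apply/forall_inP => s Hs; apply: Hv.
  move: Hs; rewrite inE => /submxP [a ->]; apply: inC2.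
  by rewrite -mulmxA G00 mulmx0.
have Dort (u c : 'rV['F_2]_n) : u \in dual C2 -> c \in C2 -> u *m c^T = 0.
  by rewrite inE => /forall_inP H /H /eqP.
set D := dual C2.
have state (p : 'rV['F_2]_k) (z : 'rV['F_2]_n) :
   logical_state C2 G1 p z = 0 \/ exists2 u, u \in D & z = p *m G1 + u.
  case: (boolP [exists u in D, z == p *m G1 + u]).
    by move=> /exists_inP [u uD /eqP ->]; right; exists u.
  move=> /exists_inP H; left; rewrite /logical_state big1 ?mulr0 //.
  by move=> u uD; case: eqP => // E; case: H; exists u => //; apply/eqP.
rewrite /CZn /tensor.
case: (state psi x) => [->|[u uD Ex]]; first by rewrite !mul0r !mulr0.
case: (state phi y) => [->|[v vD Ey]]; first by rewrite !mulr0.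
congr (_ * _); rewrite prod_sgn Ex Ey; congr (sgnF2 (_ 0 0)).
rewrite linearD /= !mulmxDl !mulmxDr (Dort _ _ uD (G1C2 phi)) (Dort _ _ uD (DC2 _ vD)).
have -> : psi *m G1 *m v^T = 0.
  by rewrite -[LHS]trmxK trmx_mul trmxK (Dort _ _ vD (G1C2 psi)) trmx0.
by rewrite trmx_mul -!mulmxA [G1 *m (_ *m _)]mulmxA G11 mul1mx !addr0.
Qed.
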